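(* Let $b\ge 2$ be even and $n\ge 1$. Then $\{b^{n+i}+1 : i\in\{0,1,\dots,n\}\}$ is the minimal system of generators of $SC^{+}(b,n)$; in particular $e(SC^{+}(b,n))=n+1$.
   Context: For an even integer $b\ge2$ and $n\ge0$, $SC^{+}(b,n)=\langle\{b^{n+i}+1: i\in\mathbb{N}\}\rangle$, the submonoid of $(\mathbb{N},+)$ generated by these numbers (a numerical semigroup). The minimal system of generators of a numerical semigroup $S$ is the unique generating set no proper subset of which generates $S$; $e(S)$ is its cardinality. *)

(* Defs.v *)
From mathcomp Require Import all_boot.
Set Implicit Arguments. Unset Strict Implicit. Unset Printing Implicit Defensive.

Inductive gen_monoid (G : nat -> Prop) : nat -> Prop :=
| gm0 : gen_monoid G 0
| gm_gen x : G x -> gen_monoid G x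
| gm_add x y : gen_monoid G x -> gen_monoid G y -> gen_monoid G (x + y).

Definition SCplus (b n : nat) : nat -> Prop :=
  gen_monoid (fun x => exists i, x = b ^ (n + i) + 1).

Definition minimal_generating_system (A S : nat -> Prop) : Prop :=
  (forall x, gen_monoid A x <-> S x) /\
  (forall B : nat -> Prop,
     (forall x, B x -> A x) -> (exists x, A x /\ ~ B x) ->
     ~ (forall x, gen_monoid B x <-> S x)).

(* Main.v *)
Require Import Defs.
From mathcomp Require Import all_boot zify ring.

Lemma gm_mul (G : nat -> Prop) q x : gen_monoid G x -> gen_monoid G (q * x).
Proof.
move=> H; elim: q => [|q IH]; first exact: gm0.
rewrite mulSn; exact: gm_add.
Qed.

Lemma two_n n : 1 <= n -> 2 * n <= 2 ^ n.
Proof.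
elim: n => // [[|n]] IH _ //.
rewrite expnS; have := IH isT; lia.
Qed.

Section G.
Variables b n : nat.
Hypothesis hb : 2 <= b.
Hypothesis hn : 1 <= n.
Definition Agen := fun x => exists2 i, i <= n & x = b ^ (n + i) + 1.

Fixpoint pw (j k : nat) : nat :=
  match k with 0 => 0 | k'.+1 => pw j k' + (b-1) * b ^ (j + k') end.

Lemma pw_eq j k : pw j k + b ^ j = b ^ (j + k).
Proof.
elim: k => [|k IH] /=; first by rewrite add0n addn0.
rewrite -addnA (addnC _ (b^j)) addnA IH addnS expnS.
have : 1 <= b by lia. move: (b ^ (j + k)) => y. nia.
Qed.

Lemma pw_gen j k : j + k <= n ->
  gen_monoid Agen (b ^ n * pw j k + (b - 1) * k).
Proof.
elim: k => [|k IH] /= hjk; first by rewrite !muln0; exact: gm0.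
have -> : b ^ n * (pw j k + (b - 1) * b ^ (j + k)) + (b - 1) * k.+1 =
  (b ^ n * pw j k + (b - 1) * k) + (b-1) * (b ^ (n + (j + k)) + 1).
  rewrite (expnD b n). move: (b ^ n) (b ^ (j+k)) (b - 1) (pw j k) => x y z p. rewrite mulnS. ring.
apply: gm_add; first by apply: IH; lia.
apply: gm_mul; apply: gm_gen; exists (j + k) => //; lia.
Qed.

Lemma gen_all i : gen_monoid Agen (b ^ (n + i) + 1).
Proof.
elim/ltn_ind: i => i IH.
case: (leqP i n) => hin; first by apply: gm_gen; exists i.
have g0 : gen_monoid Agen (b ^ n + 1).
  by apply: gm_gen; exists 0 => //; rewrite addn0.
have cpos : 1 <= b ^ n by rewrite expn_gt0; lia.
case: (leqP (2 * n) i) => h2.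
- have HR := IH (i - 2 * n) ltac:(lia).
  have -> : b ^ (n + i) + 1 =
     (b ^ (n + (i - 2 * n)) + 1) + (b ^ (i - 2*n) * (b ^ n - 1) * b ^ n) * (b ^ n + 1).
    have -> : n + i = (i - 2 * n) + n + n + n by lia.
    have -> : n + (i - 2 * n) = (i - 2 * n) + n by lia.
    rewrite !expnD. move: (b ^ (i - 2*n)) (b ^ n) cpos => u c hc.
    have -> : c = (c - 1).+1 by lia. move: (c - 1) => d. nia.
  apply: gm_add => //; exact: gm_mul.
- set j := i - n. set k := n - j.
  have hj : 1 <= j by lia.
  have hk : j + k = n by lia.
  have g1 : gen_monoid Agen (b ^ n * b + 1).
    by apply: gm_gen; exists 1 => //; rewrite expnD expn1.
  have HP := pw_eq j k. rewrite hk in HP.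
  have bj : b <= b ^ j.
    by rewrite -{1}(expn1 b); apply: leq_pexp2l; lia.
  have hbn : 2 ^ n <= b ^ n by rewrite leq_exp2r; lia.
  have h2n := @two_n n hn.
  have key : b ^ n + b * k <= b ^ n * b ^ j.
    have : b ^ n * b <= b ^ n * b ^ j by rewrite leq_mul2l bj orbT.
    have : b * k <= (b - 1) * b ^ n.
      have : b * k <= (b - 1) * (2 * n) by nia.
      move=> h; apply: (leq_trans h); rewrite leq_mul2l; lia.
    nia.
  have -> : b ^ (n + i) + 1 =
    ((b ^ n * pw j k + (b - 1) * k) + k * (b ^ n * b + 1)) +
    (b ^ n * b ^ j + 1 - b ^ n - b * k) * (b ^ n + 1).
    have -> : n + i = n + n + j by lia.
    rewrite !expnD.
    move: key HP cpos; move: (b ^ n) (b ^ j) (pw j k) => c bj' P key HP hc.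
    set d := c * bj' + 1 - c - b * k.
    have hd : d + c + b * k = c * bj' + 1 by lia.
    have hP : P = c - bj' by lia.
    rewrite hP.
    have hb1 : (b - 1) * k + k * (c * b + 1) = b * k * (c + 1).
      have -> : b = (b - 1).+1 by lia.
      move: (b - 1) => b'. rewrite subSS subn0. ring.
    have hcb : bj' <= c by lia.
    have -> : c * (c - bj') = c * c - c * bj' by rewrite mulnBr.
    have : c * bj' <= c * c by rewrite leq_mul2l hcb orbT.
    have hd2 : (d + c + b * k) * (c + 1) = (c * bj' + 1) * (c + 1) by rewrite hd.
    clear hd; move: hd2 hb1; move: (b - 1) d => b' d'. nia.
  apply: gm_add; last exact: gm_mul.
  apply: gm_add; last exact: gm_mul. apply: pw_gen; lia.
Qed.
Lemma inv (B : nat -> Prop) : (forall x, B x -> Agen x) -> forall y, gen_monoid B y ->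
  exists k, y %% b ^ n = k %% b ^ n /\ k * (b ^ n + 1) <= y /\
            y <= k * (b ^ n * b ^ n + 1) /\ (k = 1 -> B y).
Proof.
move=> hBA y; elim => [|x Bx|x y' _ [k1 [m1 [l1 [u1 e1]]]] _ [k2 [m2 [l2 [u2 e2]]]]].
- by exists 0.
{ exists 1; have hB1 : 1 = 1 -> B x by [].
  move: hB1; have [i hi ->] := hBA x Bx => hB1.
  do 3? split => //.
  by rewrite expnD mulnC modnMDl.
  all: have : b ^ i <= b ^ n by apply: leq_pexp2l; lia.
  all: have : 1 <= b ^ i by rewrite expn_gt0; lia.
  all: rewrite expnD; move: (b ^ i) (b ^ n) => p c; nia.
}
- exists (k1 + k2); split; first by rewrite -modnDm m1 m2 modnDm.
  split; first lia. split; first lia.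
  move=> h; case: k1 h m1 l1 u1 e1 => [|[|k1]] /= h _ l1 u1 e1.
  + have -> : x = 0 by lia. rewrite add0n; apply: e2; lia.
  + have -> : y' = 0 by lia. rewrite addn0; exact: e1.
  + lia.
Qed.
End G.

Theorem mainTheorem15 (b n : nat) :
  2 <= b -> ~~ odd b -> 1 <= n ->
  minimal_generating_system
    (fun x => exists2 i, i <= n & x = b ^ (n + i) + 1) (SCplus b n) /\
  (* e(SC^+(b,n)) = n + 1: the minimal system {b^(n+i)+1 : 0 <= i <= n}
     enumerated without repetition has exactly n + 1 elements *)
  uniq [seq b ^ (n + i) + 1 | i <- iota 0 n.+1] /\
  size [seq b ^ (n + i) + 1 | i <- iota 0 n.+1] = n.+1.
Proof.
move=> hb _ hn.
have AS : forall x, gen_monoid (Agen b n) x <-> SCplus b n x.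
  move=> x; split.
  - elim => [|y [i _ ->]|y z _ Hy _ Hz]; first exact: gm0.
    + by apply: gm_gen; exists i.
    + exact: gm_add.
  - elim => [|y [i ->]|y z _ Hy _ Hz]; first exact: gm0.
    + exact: gen_all.
    + exact: gm_add.
split; [split; first exact: AS|split].
- move=> B hBA [x [[j hj ->] nB]] hBS.
  have := (proj2 (hBS _)) (proj1 (AS _) (@gm_gen (Agen b n) _ (ex_intro2 _ _ j hj erefl))).
  move=> /(@inv b n hb hn B hBA) [k [m [l [u e]]]].
  have c2 : 2 <= b ^ n.
    by apply: (@leq_trans (b ^ 1)); [rewrite expn1 | apply: leq_pexp2l]; lia.
  have bj : b ^ j <= b ^ n by apply: leq_pexp2l; lia.
  case: k m l u e => [|[|k]] m l u e.
  + lia.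
  + by apply: nB; apply: e.
  + move: m l u; rewrite expnD mulnC modnMDl => m l u.
    have hk : b ^ n < k.+2.
      rewrite ltnNge; apply/negP => hk.
      move: m; rewrite (modn_small (m := 1)) //.
      rewrite leq_eqVlt in hk; case/orP: hk => [/eqP -> | hk]; first by rewrite modnn.
      by rewrite modn_small.
    move: l u; move: (b ^ n) (b ^ j) hk bj c2 => c p. nia.
- rewrite map_inj_uniq ?iota_uniq // => x y /addIn /(expnI hb) /addnI //.
- by rewrite size_map size_iota.
Qed.
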